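(* Let $d\ge 1$, $0<\mu\le L$, let $A\in\mathbb{R}^{d\times d}$ be symmetric with $\mu I\preceq A\preceq LI$, let $b\in\mathbb{R}^d$, and let $f(x)=\frac12 x^\top Ax+b^\top x$. Let $x_0\in\mathbb{R}^d$ be arbitrary and let $\{x_t\},\{G_t\}$ be generated by Sharpened-BFGS for quadratics (defined in the context), and assume $\nabla f(x_t)\neq 0$ for all $t$ considered. Then for all $t\ge 0$, $$\theta(A,G_t,x_{t+1}-x_t)\le 1-\frac{\mu}{L},$$ and consequently $\lambda_t\le \left(1-\frac{\mu}{L}\right)^t\lambda_0$ for all $t\ge 0$, where $\lambda_t:=\lambda_f(x_t)$.
   Context: For symmetric positive definite $A,G\in\mathbb{R}^{d\times d}$ and $u\in\mathbb{R}^d\setminus\{0\}$, the BFGS operator is $\mathrm{BFGS}(A,G,u):=G-\frac{Guu^\top G}{u^\top Gu}+\frac{Auu^\top A}{u^\top Au}$. The greedy vector is $\bar u(A,G):=\arg\max_{u\in\{e_1,\dots,e_d\}}\frac{u^\top Gu}{u^\top Au}$ (ties broken arbitrarily), where $e_i$ is the $i$-th standard basis vector. Define $\theta(A,G,u):=\left(\frac{u^\top (G-A)A^{-1}(G-A)u}{u^\top GA^{-1}Gu}\right)^{1/2}$. The Newton decrement is $\lambda_f(x):=\sqrt{\nabla f(x)^\top\nabla^2 f(x)^{-1}\nabla f(x)}$. Sharpened-BFGS for quadratics: set $G_0=LI$; for $t=0,1,2,\dots$: $x_{t+1}=x_t-G_t^{-1}\nabla f(x_t)$, $s_t=x_{t+1}-x_t$,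 $\bar G_t=\mathrm{BFGS}(A,G_t,s_t)$, $\bar u=\bar u(A,\bar G_t)$, $G_{t+1}=\mathrm{BFGS}(A,\bar G_t,\bar u)$. *)

(* Defs.v *)
From HB Require Import structures.
From mathcomp Require Import all_boot all_order all_algebra.
Set Implicit Arguments. Unset Strict Implicit. Unset Printing Implicit Defensive.
Import Order.TTheory GRing.Theory Num.Theory.
Local Open Scope ring_scope.

Section Defs.
Variables (R : rcfType) (d : nat).

Definition bform (M : 'M[R]_d) (u v : 'cV[R]_d) : R := (u^T *m M *m v) 0 0.

Definition sym_mx (M : 'M[R]_d) : Prop := M^T = M.

Definition loewner_le (M1 M2 : 'M[R]_d) : Prop :=
  forall v : 'cV[R]_d, bform M1 v v <= bform M2 v v.

Definition BFGS (A G : 'M[R]_d) (u : 'cV[R]_d) : 'M[R]_d :=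
  G - (bform G u u)^-1 *: (G *m u *m u^T *m G)
    + (bform A u u)^-1 *: (A *m u *m u^T *m A).

Definition e_ (i : 'I_d) : 'cV[R]_d := delta_mx i 0.

Definition is_greedy (A G : 'M[R]_d) (i : 'I_d) : Prop :=
  forall j : 'I_d,
    bform G (e_ j) (e_ j) / bform A (e_ j) (e_ j)
      <= bform G (e_ i) (e_ i) / bform A (e_ i) (e_ i).

Definition theta (A G : 'M[R]_d) (u : 'cV[R]_d) : R :=
  Num.sqrt (bform ((G - A) *m invmx A *m (G - A)) u u
            / bform (G *m invmx A *m G) u u).

Definition quadf (A : 'M[R]_d) (b x : 'cV[R]_d) : R :=
  2^-1 * bform A x x + (b^T *m x) 0 0.
Definition grad_quad (A : 'M[R]_d) (b x : 'cV[R]_d) : 'cV[R]_d := A *m x + b.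
Definition hess_quad (A : 'M[R]_d) (b x : 'cV[R]_d) : 'M[R]_d := A.

Definition newton_decr (A : 'M[R]_d) (b x : 'cV[R]_d) : R :=
  Num.sqrt (bform (invmx (hess_quad A b x)) (grad_quad A b x) (grad_quad A b x)).

Definition sharpened_bfgs_run (A : 'M[R]_d) (b : 'cV[R]_d) (L : R)
    (x0 : 'cV[R]_d) (x : nat -> 'cV[R]_d) (G : nat -> 'M[R]_d) : Prop :=
  x 0%N = x0 /\ G 0%N = L%:M /\
  forall t : nat,
    x t.+1 = x t - invmx (G t) *m grad_quad A b (x t) /\
    let Gbar := BFGS A (G t) (x t.+1 - x t) in
    exists i : 'I_d, is_greedy A Gbar i /\ G t.+1 = BFGS A Gbar (e_ i).

End Defs.

(* Main.v *)
Require Import Defs.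
From HB Require Import structures.
From mathcomp Require Import all_boot all_order all_algebra.
From mathcomp Require Import lra ring.
Import Order.TTheory GRing.Theory Num.Theory.
Local Open Scope ring_scope.

Section Aux.
Variables (R : rcfType) (d : nat).
Implicit Types (M G : 'M[R]_d) (u v w p q : 'cV[R]_d).
Local Notation bf := (@bform R d).

Lemma bformE M u v : bf M u v = (u^T *m (M *m v)) 0 0.
Proof. by rewrite /bform mulmxA. Qed.

Lemma bform_tr M u v : bf M u v = bf M^T v u.
Proof.
rewrite /bform; transitivity (((u^T *m M *m v)^T) 0 0); first by rewrite [RHS]mxE.
by rewrite !trmx_mul trmxK mulmxA.
Qed.

Lemma bform_sym M u v : M^T = M -> bf M v u = bf M u v.
Proof. by move=> sM; rewrite bform_tr sM. Qed.

Lemma bformDm M1 M2 u v : bf (M1 + M2) u v = bf M1 u v + bf M2 u v.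
Proof. by rewrite /bform mulmxDr mulmxDl mxE. Qed.

Lemma bformNm M u v : bf (- M) u v = - bf M u v.
Proof. by rewrite /bform mulmxN mulNmx mxE. Qed.

Lemma bformBm M1 M2 u v : bf (M1 - M2) u v = bf M1 u v - bf M2 u v.
Proof. by rewrite bformDm bformNm. Qed.

Lemma bformZm k M u v : bf (k *: M) u v = k * bf M u v.
Proof. by rewrite /bform -scalemxAr -scalemxAl mxE. Qed.

Lemma bformDr M u v w : bf M u (v + w) = bf M u v + bf M u w.
Proof. by rewrite /bform mulmxDr mxE. Qed.

Lemma bformZr M u v k : bf M u (k *: v) = k * bf M u v.
Proof. by rewrite /bform -scalemxAr mxE. Qed.

Lemma bformDl M u v w : bf M (v + w) u = bf M v u + bf M w u.
Proof. by rewrite bform_tr bformDr -!bform_tr. Qed.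

Lemma bformNr M u v : bf M u (- v) = - bf M u v.
Proof. by rewrite /bform mulmxN mxE. Qed.

Lemma bformZl M u v k : bf M (k *: v) u = k * bf M v u.
Proof. by rewrite bform_tr bformZr -bform_tr. Qed.

Lemma bform_comb M (x y : R) p q : M^T = M ->
  bf M (x *: p + y *: q) (x *: p + y *: q) =
  x ^+ 2 * bf M p p + 2 * x * y * bf M p q + y ^+ 2 * bf M q q.
Proof.
move=> sM; rewrite !bformDl !bformDr !bformZl !bformZr (bform_sym _ _ _ sM); ring.
Qed.

Lemma bform_rank1 (X Y : 'M[R]_d) u v :
  bf (X *m u *m u^T *m Y) v v = bf X v u * bf Y u v.
Proof.
rewrite /bform.
have -> : v^T *m (X *m u *m u^T *m Y) *m v = (v^T *m X *m u) *m (u^T *m Y *m v)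
  by rewrite !mulmxA.
by rewrite mxE big_ord1.
Qed.

Lemma bform_mul M N u v : bf (M *m N) u v = bf M u (N *m v).
Proof. by rewrite /bform !mulmxA. Qed.

Lemma bform_inv_sandwich (X M : 'M[R]_d) v :
  bf X (M *m v) (M *m v) = bf (M^T *m X *m M) v v.
Proof. by rewrite /bform trmx_mul !mulmxA. Qed.

Lemma bformN_vec M v : bf M (- v) (- v) = bf M v v.
Proof. have -> : - v = (-1) *: v by rewrite scaleN1r.
by rewrite bformZl bformZr !mulN1r opprK. Qed.

Lemma nrm_gt0 v : v != 0 -> 0 < bf 1%:M v v.
Proof.
move=> nz.
have [i vi] : exists i, v i 0 != 0.
  case: (boolP [exists i, v i 0 != 0]) => [/existsP//|/existsPn H].
  move/negP: nz; case; apply/eqP/matrixP => i j; rewrite (ord1 j) mxE.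
  by move: (H i); rewrite negbK => /eqP.
rewrite /bform mulmx1 mxE (bigD1 i) //= ltr_wpDr //.
  by apply: sumr_ge0 => j _; rewrite mxE -expr2 sqr_ge0.
by rewrite mxE lt_def mulf_neq0 //= -expr2 sqr_ge0.
Qed.

Lemma bform_scalar (k : R) v : bf k%:M v v = k * bf 1%:M v v.
Proof. by rewrite -[k%:M]scalemx1 bformZm. Qed.

Lemma pd_unit M : (forall v, v != 0 -> 0 < bf M v v) -> M \in unitmx.
Proof.
move=> pd; rewrite unitmxE unitfE; apply/negP => /det0P [w wn0 wM].
have := pd w^T; rewrite trmx_eq0 => /(_ wn0).
by rewrite /bform trmxK wM mul0mx mxE ltxx.
Qed.

End Aux.
Lemma core (R : realFieldType) (mu L D g a h : R) : 0 < mu -> mu < L ->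
  mu * ((2*L-mu)^+2 * h + 2*(2*L-mu)*(-L)*D + (-L)^+2 * g) <= L * ((2*L-mu)^+2 * D + 2*(2*L-mu)*(-L)*g + (-L)^+2 * a) ->
  mu^+2 * D + 2*mu*(-L)*g + (-L)^+2*a <= mu^+2*h + 2*mu*(-L)*D + (-L)^+2*g ->
  mu * g <= L * a ->
  L^+2*(D - 2*g + a) <= (L-mu)^+2 * D.
Proof. move=> hm hL F1 F2 Hs.
set X := (L-mu)^+2 * D - L^+2*(D - 2*g + a).
have H1 : 0 <= (L - mu) * ((2*L+mu) * X - 2*L*(L-mu)*(L*a - mu*g)).
  have -> : (L - mu) * ((2*L+mu) * X - 2*L*(L-mu)*(L*a - mu*g)) =
    mu * (L * ((2*L-mu)^+2*D - 2*(2*L-mu)*L*g + L^+2*a) - mu * ((2*L-mu)^+2*h - 2*(2*L-mu)*L*D + L^+2*g))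
    + (2*L-mu)^+2 * ((mu^+2*h - 2*mu*L*D + L^+2*g) - (mu^+2*D - 2*mu*L*g + L^+2*a)) by rewrite /X; ring.
  apply: addr_ge0; apply: mulr_ge0; rewrite ?subr_ge0 ?sqr_ge0 //; lra.
have H2 : 0 <= (2*L+mu) * X - 2*L*(L-mu)*(L*a - mu*g).
  rewrite pmulr_rge0 in H1; lra.
have H3 : 0 <= 2*L*(L-mu)*(L*a - mu*g) by apply: mulr_ge0; [apply: mulr_ge0|]; lra.
rewrite -subr_ge0 -/X. have : 0 <= (2*L+mu) * X by lra.
rewrite pmulr_rge0 //; lra.
Qed.
Lemma core_eq (R : realFieldType) (L D g a h : R) : 0 < L ->
  L * h <= L * D ->
  1^+2*D + 2*1*(-1)*g + (-1)^+2*a <= 1^+2*h + 2*1*(-1)*D + (-1)^+2*g ->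
  a <= g ->
  L^+2*(D - 2*g + a) <= (L-L)^+2 * D.
Proof. move=> hL F1 F2 F3. rewrite subrr expr0n /= mul0r.
have : h <= D by rewrite -(ler_pM2l hL).
move=> *; apply: mulr_ge0_le0; rewrite ?sqr_ge0 //; lra.
Qed.
Set Implicit Arguments.
Section Main.
Variables (R : rcfType) (d : nat) (mu L : R) (A : 'M[R]_d).
Hypotheses (hmu : 0 < mu) (hmuL : mu <= L) (hAsym : A^T = A)
  (hAlo : forall v, mu * bform 1%:M v v <= bform A v v).
Local Notation bf := (@bform R d).
Implicit Types (G : 'M[R]_d) (u v s : 'cV[R]_d).

Definition Inv (G : 'M[R]_d) := G^T = G /\ (forall v, bf A v v <= bf G v v) /\
  (forall v, mu * bf G v v <= L * bf A v v).

Lemma A_pd v : v != 0 -> 0 < bf A v v.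
Proof. move=> nz; apply: lt_le_trans (hAlo v); apply: mulr_gt0 => //; exact: nrm_gt0. Qed.

Lemma Inv_pd G v : Inv G -> v != 0 -> 0 < bf G v v.
Proof. by move=> [_ [lo _]] nz; apply: lt_le_trans (lo v); apply: A_pd. Qed.

Lemma Inv_unit G : Inv G -> G \in unitmx.
Proof. by move=> I; apply: pd_unit => v; apply: (@Inv_pd G v I). Qed.

Lemma A_unit : A \in unitmx.
Proof. by apply: pd_unit => v; apply: A_pd. Qed.

Lemma bfgs_form G u v : G^T = G ->
  bf (BFGS A G u) v v = bf G v v - (bf G u u)^-1 * (bf G u v)^+2
     + (bf A u u)^-1 * (bf A u v)^+2.
Proof.
move=> sG; rewrite /BFGS bformDm bformBm !bformZm !bform_rank1.
by rewrite (@bform_sym _ _ G u v sG) (@bform_sym _ _ A u v hAsym) !expr2.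
Qed.

Lemma bfgs_sym G u : G^T = G -> (BFGS A G u)^T = BFGS A G u.
Proof.
move=> sG; rewrite /BFGS raddfD raddfB /= !linearZ /= !trmx_mul !trmxK sG hAsym.
by rewrite !mulmxA.
Qed.

Lemma bfgs_inv G u : Inv G -> u != 0 -> Inv (BFGS A G u).
Proof.
move=> I nz; have gu0 := @Inv_pd G u I nz; have au0 := @A_pd u nz.
move: I => [sG [lo hi]]; split; first exact: bfgs_sym.
split => v; rewrite bfgs_form //.
- set t := bf G u v / bf G u u.
  have := lo ((-t) *: u + 1 *: v); rewrite !bform_comb //.
  have s1 : 0 <= (bf A u u)^-1 * (bf A u u * t - bf A u v)^+2.
    by apply: mulr_ge0; rewrite ?invr_ge0 ?sqr_ge0 ?ltW.
  have -> : (-t)^+2 * bf G u u + 2 * (-t) * 1 * bf G u v + 1^+2 * bf G v v =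
    bf G v v - (bf G u u)^-1 * (bf G u v)^+2.
    by rewrite /t; field; rewrite gt_eqF.
  have -> : (-t)^+2 * bf A u u + 2 * (-t) * 1 * bf A u v + 1^+2 * bf A v v =
    bf A v v - (bf A u u)^-1 * (bf A u v)^+2 + (bf A u u)^-1 * (bf A u u * t - bf A u v)^+2.
    by field; rewrite gt_eqF.
  lra.
- set t := bf A u v / bf A u u.
  have := hi ((-t) *: u + 1 *: v); rewrite !bform_comb //.
  have s1 : 0 <= mu * ((bf G u u)^-1 * (bf G u u * t - bf G u v)^+2).
    by apply: mulr_ge0; [apply: ltW|apply: mulr_ge0; rewrite ?invr_ge0 ?sqr_ge0 ?ltW].
  have s2 : 0 <= (L - mu) * ((bf A u u)^-1 * (bf A u v)^+2).
    by apply: mulr_ge0; [rewrite subr_ge0|apply: mulr_ge0; rewrite ?invr_ge0 ?sqr_ge0 ?ltW].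
  have -> : (-t)^+2 * bf G u u + 2 * (-t) * 1 * bf G u v + 1^+2 * bf G v v =
    bf G v v - (bf G u u)^-1 * (bf G u v)^+2 + (bf G u u)^-1 * (bf G u u * t - bf G u v)^+2.
    by field; rewrite gt_eqF.
  have -> : (-t)^+2 * bf A u u + 2 * (-t) * 1 * bf A u v + 1^+2 * bf A v v =
    bf A v v - (bf A u u)^-1 * (bf A u v)^+2.
    by rewrite /t; field; rewrite gt_eqF.
  lra.
Qed.

Lemma theta_key G s : Inv G -> s != 0 ->
  0 < bf (G *m invmx A *m G) s s /\
  L^+2 * bf ((G - A) *m invmx A *m (G - A)) s s <= (L - mu)^+2 * bf (G *m invmx A *m G) s s.
Proof.
move=> I nz; have gs0 := @Inv_pd G s I nz; have as0 := @A_pd s nz.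
move: I => [sG [lo hi]].
set z := invmx A *m (G *m s).
have Az : A *m z = G *m s by rewrite /z mulmxA mulmxV ?A_unit // mul1mx.
have Eas : bf A z s = bf G s s.
  by rewrite (@bform_sym _ _ A s z hAsym) bformE Az -bformE.
have Egz : bf G z s = bf A z z by rewrite bformE -Az -bformE.
have ED : bf (G *m invmx A *m G) s s = bf A z z.
  by rewrite bform_mul bform_mul -/z (@bform_sym _ _ G z s sG) Egz.
have EN : bf ((G - A) *m invmx A *m (G - A)) s s = bf A z z - 2 * bf G s s + bf A s s.
  rewrite bform_mul bform_mul mulmxBl mulmxBr -/z mulmxA mulVmx ?A_unit // mul1mx.
  rewrite bformBm !bformDr !bformNr (@bform_sym _ _ G z s sG) Egz.
  rewrite (@bform_sym _ _ A z s hAsym) Eas; ring.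
rewrite ED EN.
have zn0 : z != 0.
  apply/negP => /eqP z0; move: gs0; rewrite bformE -Az z0 mulmx0 mulmx0 mxE ltxx.
  done.
split; first exact: A_pd.
have Hs : mu * bf G s s <= L * bf A s s by apply: hi.
have [eqL|ltL] := eqVneq mu L.
  rewrite -eqL subrr expr0n /= mul0r.
  have F1 := hi z. rewrite -eqL in F1.
  have F2 := lo (1 *: z + (-1) *: s); rewrite !bform_comb // Eas Egz in F2.
  have := @core_eq R mu (bf A z z) (bf G s s) (bf A s s) (bf G z z) hmu.
  rewrite subrr expr0n /= mul0r; apply => //; try exact: lo.
have ltL' : mu < L by rewrite lt_def eq_sym ltL.
have F1 := hi ((2*L - mu) *: z + (-L) *: s); rewrite !bform_comb // Eas Egz in F1.
have F2 := lo (mu *: z + (-L) *: s); rewrite !bform_comb // Eas Egz in F2.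
exact: (@core R mu L (bf A z z) (bf G s s) (bf A s s) (bf G z z)).
Qed.

End Main.

Theorem theorem1 (R : rcfType) (d : nat) (hd : (0 < d)%N) (mu L : R)
  (hmu : 0 < mu) (hmuL : mu <= L) (A : 'M[R]_d) (b x0 : 'cV[R]_d)
  (hAsym : sym_mx A)
  (hAlo : loewner_le (mu%:M) A) (hAhi : loewner_le A (L%:M))
  (x : nat -> 'cV[R]_d) (G : nat -> 'M[R]_d)
  (hrun : sharpened_bfgs_run A b L x0 x G)
  (hgrad : forall t : nat, grad_quad A b (x t) != 0) :
  forall t : nat,
    theta A (G t) (x t.+1 - x t) <= 1 - mu / L /\
    newton_decr A b (x t) <= (1 - mu / L) ^+ t * newton_decr A b (x 0%N).
Proof.
move: hrun => [hx0 [hG0 hstep]].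
have hAlo' : forall v, mu * bform 1%:M v v <= bform A v v.
  by move=> v; have := hAlo v; rewrite bform_scalar.
have hL : 0 < L by apply: lt_le_trans hmuL.
have step : forall t, Inv R mu L A (G t) ->
   (x t.+1 - x t != 0) /\ grad_quad A b (x t) = - (G t *m (x t.+1 - x t))
   /\ grad_quad A b (x t.+1) = - ((G t - A) *m (x t.+1 - x t)).
  move=> t I; have Gu := Inv_unit hmu hAlo' I.
  have [ex _] := hstep t.
  set s := x t.+1 - x t.
  have Es : s = - (invmx (G t) *m grad_quad A b (x t)).
    by rewrite /s ex addrAC subrr add0r.
  have EG : grad_quad A b (x t) = - (G t *m s).
    by rewrite Es mulmxN mulmxA mulmxV // mul1mx opprK.
  split; [|split] => //.
    apply/negP => /eqP s0; move: (hgrad t); rewrite EG s0 mulmx0 oppr0 eqxx.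
    done.
  rewrite /grad_quad in EG *.
  rewrite (_ : x t.+1 = x t + s); last by rewrite /s addrC subrK.
  by rewrite mulmxDr addrAC EG mulmxBl opprB addrC.
have Inv_all : forall t, Inv R mu L A (G t).
  elim => [|t IH].
    rewrite hG0; split; first by rewrite tr_scalar_mx.
    split => v; first exact: hAhi.
    rewrite bform_scalar mulrCA; apply: ler_wpM2l; [exact: ltW| exact: hAlo'].
  have [s0 _] := step t IH.
  case: (hstep t) => _ /= [i [_ ->]].
  apply: bfgs_inv => //; first by apply: bfgs_inv.
  apply/negP => /eqP /matrixP /(_ i 0); rewrite !mxE !eqxx /= => /eqP.
  by rewrite oner_eq0.
set k := 1 - mu / L.
have k0 : 0 <= k by rewrite /k subr_ge0 ler_pdivrMr // mul1r.
have ek : k ^+ 2 = (L - mu) ^+ 2 / L ^+ 2 by rewrite /k; field; rewrite gt_eqF.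
have bd : forall t, theta A (G t) (x t.+1 - x t) <= k /\
    newton_decr A b (x t.+1) <= k * newton_decr A b (x t).
  move=> t; have I := Inv_all t.
  have [s0 [EG EG1]] := step t I.
  have [D0 key] := theta_key hmu hmuL hAsym hAlo' _ I s0.
  move: I => [sG _].
  set N := bform ((G t - A) *m invmx A *m (G t - A)) (x t.+1 - x t) (x t.+1 - x t) in key *.
  set D := bform (G t *m invmx A *m G t) (x t.+1 - x t) (x t.+1 - x t) in D0 key *.
  have key' : N <= k ^+ 2 * D.
    by rewrite ek mulrAC ler_pdivlMr ?exprn_gt0 // mulrC.
  split.
    rewrite /theta -/N -/D -(ger0_norm k0) -sqrtr_sqr ler_sqrt ?sqr_ge0 //.
    by rewrite ler_pdivrMr.
  rewrite /newton_decr /hess_quad EG1 EG !bformN_vec !bform_inv_sandwich.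
  have tGA : (G t - A)^T = G t - A by rewrite linearB /= sG (hAsym : A^T = A).
  rewrite tGA sG -/N -/D.
  rewrite -(ger0_norm k0) -sqrtr_sqr -sqrtrM ?sqr_ge0 // ler_sqrt ?mulr_ge0 ?sqr_ge0 ?(ltW D0) //.
move=> t; split; first exact: (bd t).1.
elim: t => [|t IH]; first by rewrite expr0 mul1r.
apply: le_trans (bd t).2 _.
by rewrite exprS -mulrA ler_wpM2l.
Qed.
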